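(* Let $G=(V,E)$ be a connected chordal graph on at least three vertices and let $E'$ be a minimum-size $(3,1)$-completion set of $G$. Let $T_i$ and $T_j$ be two distinct trees of $G$ with $|V(T_i)|\ge3$, $|V(T_j)|\ge3$ and $|E'_{i,j}|>0$. Then there is a minimum-size $(3,1)$-completion set $E''$ of $G$ with $|E''_{i,j}|=0$ obtained from $E'$ by replacing the edges of $E'_{i,j}$ with non-edges of $G$ having both endpoints in $V(T_i)$ or both endpoints in $V(T_j)$.
   Context: A graph is chordal if it has no induced cycle of length at least four. A bridge of $G$ is an edge whose removal disconnects $G$. The trees of $G$, denoted $T_1,\dots,T_c$, are the maximal connected subgraphs formed by bridges of $G$ (the non-trivial connected components of the subgraph $(V,\{\text{bridges of }G\})$). A connected graph has a $(3,1)$-cover if each edge lies in a triangle; a set $E'$ of non-edges of $G$ is a $(3,1)$-completion set if $G\cup E'$ has a $(3,1)$-cover. For a completion set $E'$ and $i\neq j$, $E'_{i,j}=\{(u,v)\in E': u\in V(T_i), v\in V(T_j)\}$. *)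

(* Defs.v *)
(* A simple graph is a symmetric irreflexive relation e on a finType T;
   its vertex set is all of T. Edges / non-edges are unordered pairs, i.e. 2-element sets. *)
From mathcomp Require Import all_boot.
Set Implicit Arguments. Unset Strict Implicit. Unset Printing Implicit Defensive.

Section Graphs.
Variable T : finType.
Implicit Types (e : rel T) (F : {set {set T}}) (A : {set T}).

Definition simple_graph e := symmetric e /\ irreflexive e.

Definition connected_graph e := forall x y : T, connect e x y.

Definition induced_cycle e (p : seq T) :=
  [/\ uniq p, 3 < size p, cycle e p &
      forall x y, x \in p -> y \in p -> e x y -> (y = next p x) \/ (y = prev p x)].

Definition chordal e := forall p : seq T, ~ induced_cycle e p.

Definition rem_edge e (u v : T) : rel T :=
  [rel x y | e x y && ~~ (((x == u) && (y == v)) || ((x == v) && (y == u)))].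

Definition is_bridge e (u v : T) : bool :=
  e u v && ~~ [forall x, forall y, connect (rem_edge e u v) x y].

Definition bridge_rel e : rel T := [rel x y | is_bridge e x y].

(* A is the vertex set of a tree of G: a non-trivial connected component
   of the spanning subgraph (V, bridges of G). *)
Definition is_tree_of e A :=
  exists r : T, A = [set x | connect (bridge_rel e) r x] /\ 1 < #|A|.

Definition non_edge e (f : {set T}) :=
  exists u v : T, [/\ u != v, ~~ e u v & f = [set u; v]].

Definition add_edges e F : rel T :=
  [rel x y | e x y || ((x != y) && ([set x; y] \in F))].

Definition has_31_cover (h : rel T) :=
  forall x y, h x y -> exists z, h x z && h y z.

Definition completion_set e F :=
  (forall f, f \in F -> non_edge e f) /\ has_31_cover (add_edges e F).

Definition min_completion_set e F :=
  completion_set e F /\ forall F2, completion_set e F2 -> #|F| <= #|F2|.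

Definition cross_edges F A (B : {set T}) : {set {set T}} :=
  [set f in F | [exists u in A, exists v in B, f == [set u; v]]].

End Graphs.

(* Main.v *)
Require Import Defs.
From mathcomp Require Import all_boot.
From mathcomp Require Import zify.
Set Implicit Arguments. Unset Strict Implicit. Unset Printing Implicit Defensive.

Lemma set2_eq (T : finType) (a b c d : T) :
  [set a; b] = [set c; d] -> (a = c /\ b = d) \/ (a = d /\ b = c).
Proof.
move=> E.
have ha : a \in [set c; d] by rewrite -E set21.
have hb : b \in [set c; d] by rewrite -E set22.
have hc : c \in [set a; b] by rewrite E set21.
have hd : d \in [set a; b] by rewrite E set22.
move/set2P: hc => [hc|hc]; move/set2P: hd => [hd|hd]; subst; auto;
move/set2P: ha => [ha|ha]; move/set2P: hb => [hb|hb]; subst; auto.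
Qed.

Lemma connect_closed_sub (T : finType) (R Q : rel T) (P : pred T) a b :
  (forall u v, P u -> R u v -> P v) -> (forall u v, P u -> R u v -> Q u v) ->
  P a -> connect R a b -> connect Q a b.
Proof.
move=> cl sub Pa /connectP[p pth ->]; elim: p a Pa pth => [|x p IH] a Pa /=.
  by rewrite connect0.
move=> /andP[Rax pth]; apply: connect_trans (connect1 (sub _ _ Pa Rax)) _.
exact: IH (cl _ _ Pa Rax) pth.
Qed.

Section BFS.
Variables (T : finType) (R : rel T) (r : T).

Fixpoint reach n : {set T} :=
  if n is m.+1 then reach m :|: [set y | [exists x in reach m, R x y]] else [set r].

Lemma reach_mono m n : m <= n -> reach m \subset reach n.
Proof.
move=> /subnK <-; elim: (n - m) => [|k IH] //=.
by apply: subset_trans IH _; apply: subsetUl.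
Qed.

Lemma reach_connect n v : v \in reach n -> connect R r v.
Proof.
elim: n v => [|n IH] v /=; first by move/set1P->.
case/setUP; first exact: IH.
rewrite inE => /existsP[x /andP[/IH cx Rxv]].
exact: connect_trans cx (connect1 Rxv).
Qed.

Lemma path_reach p : path R r p -> last r p \in reach (size p).
Proof.
elim/last_ind: p => [|p x IH] /=; first by rewrite set11.
rewrite rcons_path last_rcons size_rcons => /andP[/IH h Rx] /=.
apply/setUP; right; rewrite inE; apply/existsP; exists (last r p); by rewrite h.
Qed.

Lemma connect_reachT v : connect R r v -> v \in reach #|T|.
Proof.
move/connectP=> [p pth ->].
case/shortenP: pth => p' pth' up _.
have sz : size p' < #|T|.
  by have := max_card (mem (r :: p')); rewrite (card_uniqP up).
exact: (subsetP (reach_mono (ltnW sz))) _ (path_reach pth').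
Qed.

Definition dist v := find (fun n => v \in reach n) (iota 0 #|T|.+1).

Lemma dist_reach v : connect R r v -> v \in reach (dist v).
Proof.
move/connect_reachT=> h.
have hh : has (fun n => v \in reach n) (iota 0 #|T|.+1).
  by apply/hasP; exists #|T|; [rewrite mem_iota add0n ltnSn | exact: h].
have hf : find (fun n => v \in reach n) (iota 0 #|T|.+1) < #|T|.+1.
  by rewrite -[X in _ < X](size_iota 0 #|T|.+1) -has_find.
by have := nth_find 0 hh; rewrite nth_iota // add0n.
Qed.

Lemma dist_le v n : v \in reach n -> dist v <= n.
Proof.
move=> h; have c := reach_connect h.
case: (leqP n #|T|) => hn.
  rewrite leqNgt; apply/negP => lt.
  by have := before_find 0 lt; rewrite nth_iota ?add0n ?h // ltnS.
apply: leq_trans (ltnW hn).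
have hh : has (fun n => v \in reach n) (iota 0 #|T|.+1).
  by apply/hasP; exists #|T|; [rewrite mem_iota add0n ltnSn | exact: connect_reachT].
by rewrite has_find size_iota in hh; rewrite -ltnS.
Qed.

Lemma dist_r : dist r = 0.
Proof. by apply/eqP; rewrite -leqn0; apply: dist_le; rewrite /= set11. Qed.

Lemma dist0 v : connect R r v -> dist v = 0 -> v = r.
Proof. by move=> /dist_reach h e0; move: h; rewrite e0 => /set1P. Qed.

Lemma dist_step u v : connect R r u -> R u v -> dist v <= (dist u).+1.
Proof.
move=> cu Ruv; apply: dist_le => /=; apply/setUP; right; rewrite inE.
by apply/existsP; exists u; rewrite dist_reach.
Qed.

Lemma dist_par_ex v : connect R r v -> 0 < dist v ->
  exists u, [&& R u v, dist u == (dist v).-1 & connect R r u].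
Proof.
move=> cv; have := dist_reach cv; case E: (dist v) => [|m] // h _.
case/setUP: h => [h|].
  by have := dist_le h; rewrite E ltnn.
rewrite inE => /existsP[u /andP[hu Ruv]].
have cu := reach_connect hu.
exists u; rewrite Ruv cu /= eqn_leq (dist_le hu) /=.
by rewrite andbT; have := dist_step cu Ruv; rewrite E ltnS.
Qed.

Definition par v := odflt v [pick u | [&& R u v, dist u == (dist v).-1 & connect R r u]].

Lemma parP v : connect R r v -> 0 < dist v ->
  [/\ R (par v) v, dist (par v) = (dist v).-1 & connect R r (par v)].
Proof.
move=> cv dv; rewrite /par; case: pickP => [u /and3P[a /eqP b c] | h] /=.
  by split.
by case: (dist_par_ex cv dv) => u; rewrite h.
Qed.

Lemma descend (Q : rel T) m :
  (forall v, connect R r v -> 0 < dist v -> dist v <= m -> Q v (par v)) ->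
  forall v, connect R r v -> dist v <= m -> connect Q v r.
Proof.
move=> hQ; elim: m hQ => [|m IH] hQ v cv dv.
  by rewrite (dist0 cv) ?connect0 //; apply/eqP; rewrite -leqn0.
case: (posnP (dist v)) => d0; first by rewrite (dist0 cv d0) connect0.
have [a b c] := parP cv d0.
apply: connect_trans (connect1 (hQ v cv d0 dv)) _.
case: (leqP (dist v) m) => hm.
  apply: IH => //; last by rewrite b; apply: leq_trans hm; rewrite leq_pred.
  by move=> w cw dw dwm; apply: hQ => //; apply: leq_trans dwm _.
apply: IH => //; last by rewrite b; move: dv; case: (dist v) => //.
move=> w cw dw dwm; apply: hQ => //; apply: leq_trans dwm _; done.
Qed.

End BFS.

Lemma conn_card (T : finType) (R : rel T) (r : T) (V : {set T}) (S : {set {set T}}) :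
  r \in V -> (forall v, v \in V -> connect R r v) ->
  (forall u v, v \in V -> R u v -> [set u; v] \in S) -> #|V| <= #|S| + 1.
Proof.
move=> rV conV inS.
rewrite (cardsD1 r V) rV addnC leq_add2r.
pose g v := [set v; par R r v].
have sub : g @: (V :\ r) \subset S.
  apply/subsetP => b /imsetP[v /setD1P[vr vV] ->].
  have cv := conV v vV.
  have dv : 0 < dist R r v.
    by rewrite lt0n; apply/negP => /eqP /(dist0 cv) E; rewrite E eqxx in vr.
  have [h _ _] := parP cv dv.
  by rewrite /g setUC; apply: inS.
apply: leq_trans (subset_leq_card sub); rewrite card_in_imset //.
move=> v1 v2 /setD1P[v1r v1V] /setD1P[v2r v2V] E.
have cv1 := conV v1 v1V; have cv2 := conV v2 v2V.
have dv1 : 0 < dist R r v1.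
  by rewrite lt0n; apply/negP => /eqP /(dist0 cv1) E1; rewrite E1 eqxx in v1r.
have dv2 : 0 < dist R r v2.
  by rewrite lt0n; apply/negP => /eqP /(dist0 cv2) E1; rewrite E1 eqxx in v2r.
have [_ d1 _] := parP cv1 dv1; have [_ d2 _] := parP cv2 dv2.
case: (set2_eq E) => [[] //| [a b]].
move: d1 d2; rewrite -a -b => d1 d2; lia.
Qed.

Lemma path_traject (T : eqType) (e : rel T) (f : T -> T) n x :
  (forall j, j < n -> e (iter j f x) (iter j.+1 f x)) -> path e x (traject f (f x) n).
Proof.
elim: n x => [|n IH] x h //=.
rewrite (h 0 isT) /=; apply: IH => j hj.
by rewrite -!iterSr; apply: h.
Qed.

Lemma arith_chord k i j : i <= k -> j <= k -> k - j <= (k - i).+1 ->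
  k - i <= (k - j).+1 -> i != j -> (j = i.+1) \/ (i = j.+1).
Proof. lia. Qed.

Lemma arith1 n : 0 < n -> n = n.-1.-1 -> False. Proof. lia. Qed.
Lemma arith2 n : 0 < n -> n <= n.-1 -> False. Proof. lia. Qed.

Lemma arith_U (v s d u k c g ti tj a ai aj : nat) : v <= s + 1 -> v = ti + tj ->
  s <= d + k -> u + d = a -> a <= ai + aj -> k <= c + g -> g <= 1 ->
  ai + 1 <= ti -> aj + 1 <= tj -> u <= c.
Proof. lia. Qed.

Section Graph.
Variables (T : finType) (e : rel T).
Hypotheses (esym : symmetric e) (eirr : irreflexive e) (econn : connected_graph e).

Lemma e_neq x y : e x y -> x != y.
Proof. by apply: contraTneq => ->; rewrite eirr. Qed.

Lemma rem_edge_sym u v : symmetric (rem_edge e u v).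
Proof.
move=> x y; rewrite /rem_edge /= esym.
by case: (x == u); case: (y == v); case: (x == v); case: (y == u).
Qed.

Lemma rem_edge_swap u v x y : rem_edge e u v x y = rem_edge e v u x y.
Proof.
by rewrite /rem_edge /=; case: (x == u); case: (y == v); case: (x == v); case: (y == u).
Qed.

Lemma is_bridge_sym x y : is_bridge e x y = is_bridge e y x.
Proof.
rewrite /is_bridge esym; congr (_ && ~~ _).
apply: eq_forallb => a; apply: eq_forallb => b.
by apply: eq_connect => u w; rewrite rem_edge_swap.
Qed.

Lemma bridge_walk x y : is_bridge e x y -> ~~ connect (rem_edge e x y) x y.
Proof.
move/andP=> [exy nall]; apply/negP => c; apply: (negP nall).
apply/forallP => a; apply/forallP => b.
apply: connect_sub _ _ (econn a b) => u w euw.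
case h: (rem_edge e x y u w); first exact: connect1.
move: h; rewrite /rem_edge /= euw /= => /negbFE /orP[] /andP[/eqP -> /eqP ->] //.
by rewrite (sym_connect_sym (@rem_edge_sym x y)).
Qed.

Lemma bridge_tri x y z : is_bridge e x y -> e x z -> e y z -> False.
Proof.
move=> b exz eyz; have exy := andP b; case: exy => exy _.
apply: (negP (bridge_walk b)).
have nzy := e_neq eyz; have nxz := e_neq exz; have nxy := e_neq exy.
apply: (@connect_trans _ _ z); apply: connect1; rewrite /rem_edge /=.
  by rewrite exz (eq_sym z) (negbTE nzy) (negbTE nxy) !andbF.
by rewrite esym eyz (eq_sym z x) (negbTE nxz) (eq_sym z y) (negbTE nzy).
Qed.

Lemma notri_bridge x y : chordal e -> e x y -> ~~ [exists z, e x z && e y z] ->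
  is_bridge e x y.
Proof.
move=> ch exy ntri; rewrite /is_bridge exy /=.
apply/negP => /forallP/(_ y)/forallP/(_ x) cx.
have Qsym : symmetric (rem_edge e x y) := @rem_edge_sym x y.
have nxy := e_neq exy.
have Qe u v : rem_edge e x y u v -> e u v by case/andP.
have Qyx : ~~ rem_edge e x y y x by rewrite /rem_edge /= !eqxx /= orbT andbF.
have Qxy : ~~ rem_edge e x y x y by rewrite /rem_edge /= !eqxx /= andbF.
set k := dist (rem_edge e x y) y x.
have k0 : 0 < k.
  rewrite lt0n; apply/negP => /eqP h; move: nxy; by rewrite (dist0 cx h) eqxx.
have Hit i : i <= k -> connect (rem_edge e x y) y (iter i (par (rem_edge e x y) y) x)
    /\ dist (rem_edge e x y) y (iter i (par (rem_edge e x y) y) x) = k - i.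
  elim: i => [|i IH] hi; first by rewrite subn0.
  have [c1 d1] := IH (ltnW hi).
  have dp : 0 < dist (rem_edge e x y) y (iter i (par (rem_edge e x y) y) x)
    by rewrite d1 subn_gt0.
  have [_ d2 c2] := parP c1 dp.
  by rewrite iterS; split => //; rewrite d2 d1; lia.
have Hy : iter k (par (rem_edge e x y) y) x = y.
  by have [c1 d1] := Hit k (leqnn k); apply: (dist0 c1); rewrite d1 subnn.
have Hedge i : i < k -> rem_edge e x y (iter i.+1 (par (rem_edge e x y) y) x)
                                       (iter i (par (rem_edge e x y) y) x).
  move=> hi; have [c1 d1] := Hit i (ltnW hi).
  have dp : 0 < dist (rem_edge e x y) y (iter i (par (rem_edge e x y) y) x)
    by rewrite d1 subn_gt0.
  by have [h _ _] := parP c1 dp.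
have Hinj i j : i <= k -> j <= k -> iter i (par (rem_edge e x y) y) x =
                                    iter j (par (rem_edge e x y) y) x -> i = j.
  move=> hi hj E; have [_ di] := Hit i hi; have [_ dj] := Hit j hj.
  move: di; rewrite E dj; lia.
have k1 : 1 < k.
  rewrite ltnNge; apply/negP => hk.
  have hk1 : k = 1 by lia.
  by have := Hedge 0 k0; rewrite -hk1 Hy (negbTE Qyx).
case: (ltnP k 3) => hk3.
  have hk2 : k = 2 by lia.
  apply: (negP ntri); apply/existsP; exists (iter 1 (par (rem_edge e x y) y) x).
  have h1 := Qe _ _ (Hedge 0 k0); have h2 := Qe _ _ (Hedge 1 k1).
  move: h1 h2; rewrite -hk2 Hy => h1 h2.
  by rewrite esym h1 h2.
set f := par (rem_edge e x y) y.
pose p := traject f x k.+1.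
have sizep : size p = k.+1 by rewrite size_traject.
have nthp i : i < k.+1 -> nth x p i = iter i f x by move=> hi; rewrite nth_traject.
have up : uniq p.
  apply/(uniqP x) => i j; rewrite !inE sizep => hi hj.
  by rewrite !nthp //; apply: Hinj.
have memp u : u \in p -> exists2 i, i <= k & u = iter i f x.
  by move/trajectP => [i hi ->]; exists i.
have idxp i : i <= k -> index (iter i f x) p = i.
  by move=> hi; rewrite -nthp // index_uniq // sizep.
have nextp i : i <= k -> next p (iter i f x) = iter (if i < k then i.+1 else 0) f x.
  move=> hi; rewrite next_nth.
  have mi : iter i f x \in p by apply/trajectP; exists i.
  rewrite mi /p trajectS idxp //.
  case: ifP => hik.
    rewrite (set_nth_default (f x)) ?size_traject // nth_traject //.
    by rewrite iterSr.
  by rewrite nth_default // size_traject; lia.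
have Hchord i j : i <= k -> j <= k -> e (iter i f x) (iter j f x) ->
    [\/ j = i.+1, i = j.+1, (i = 0 /\ j = k) | (i = k /\ j = 0)].
  move=> hi hj eij.
  case: (boolP ((i == 0) && (j == k))) => [/andP[/eqP-> /eqP->]|h1]; first by constructor 3.
  case: (boolP ((i == k) && (j == 0))) => [/andP[/eqP-> /eqP->]|h2]; first by constructor 4.
  have Qij : rem_edge e x y (iter i f x) (iter j f x).
    rewrite /rem_edge /= eij /=; apply/negP => /orP[] /andP[/eqP a /eqP b].
      have := Hinj i 0 hi (leq0n k) a; have := Hinj j k hj (leqnn k) (etrans b (sym_eq Hy)).
      by move=> E1 E2; rewrite E1 E2 !eqxx in h1.
    have := Hinj i k hi (leqnn k) (etrans a (sym_eq Hy)); have := Hinj j 0 hj (leq0n k) b.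
    by move=> E1 E2; rewrite E1 E2 !eqxx in h2.
  have [ci di] := Hit i hi; have [cj dj] := Hit j hj.
  have s1 := dist_step ci Qij; have s2 := dist_step cj (etrans (Qsym _ _) Qij).
  rewrite di dj in s1 s2.
  have nij : i != j by apply/eqP => E; move: eij; rewrite E eirr.
  by case: (arith_chord hi hj s1 s2 nij) => E; [constructor 1 | constructor 2].
apply: (ch p); split => //.
- by rewrite sizep; lia.
- rewrite /p /= rcons_path; apply/andP; split.
    apply: path_traject => j hj; rewrite esym; apply: Qe; exact: Hedge.
  by rewrite last_traject Hy esym.
- move=> u v /memp[i hi ->] /memp[j hj ->] euv.
  case: (Hchord i j hi hj euv) => [E | E | [E1 E2] | [E1 E2]]; subst.
  + by left; rewrite nextp // hj.
  + right; rewrite -[iter j f x](prev_next up) nextp ?hi //.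
  + right; rewrite -[iter k f x](prev_next up) nextp //.
    by rewrite ltnn.
  + by left; rewrite nextp // ltnn.
Qed.


Lemma bridge_e x y : is_bridge e x y -> e x y.
Proof. by case/andP. Qed.

Lemma Rb_sym : symmetric (bridge_rel e).
Proof. by move=> x y; rewrite /bridge_rel /= is_bridge_sym. Qed.

Lemma tree_root A : is_tree_of e A -> exists r, A = [set x | connect (bridge_rel e) r x].
Proof. by case=> r [h _]; exists r. Qed.

Lemma tree_conn A x y : is_tree_of e A -> x \in A -> y \in A -> connect (bridge_rel e) x y.
Proof.
case/tree_root=> r -> ; rewrite !inE => cx cy.
by apply: connect_trans cy; rewrite (sym_connect_sym Rb_sym).
Qed.

Lemma tree_closed A x y : is_tree_of e A -> x \in A -> is_bridge e x y -> y \in A.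
Proof.
case/tree_root=> r ->; rewrite !inE => cx b.
by apply: connect_trans cx (connect1 _).
Qed.

Lemma tree_closed' A x y : is_tree_of e A -> y \in A -> is_bridge e x y -> x \in A.
Proof. by move=> tA yA; rewrite is_bridge_sym; apply: tree_closed. Qed.

Lemma tree_disj A B x : is_tree_of e A -> is_tree_of e B -> A != B ->
  x \in A -> x \in B -> False.
Proof.
move=> tA tB nAB xA xB; apply: (negP nAB); apply/eqP/setP => y.
apply/idP/idP => hy.
  by have := tree_conn tA xA hy; case/tree_root: tB xB => r -> ; rewrite !inE => /connect_trans; apply.
by have := tree_conn tB xB hy; case/tree_root: tA xA => r -> ; rewrite !inE => /connect_trans; apply.
Qed.

Lemma bfs_bridge r u v : connect (bridge_rel e) r u -> connect (bridge_rel e) r v ->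
  is_bridge e u v -> dist (bridge_rel e) r u <= dist (bridge_rel e) r v ->
  0 < dist (bridge_rel e) r v /\ par (bridge_rel e) r v = u.
Proof.
move=> cu cv b duv.
have nuv := e_neq (bridge_e b).
have dv : 0 < dist (bridge_rel e) r v.
  rewrite lt0n; apply/negP => /eqP d0.
  have v0 := dist0 cv d0.
  have : dist (bridge_rel e) r u = 0 by apply/eqP; rewrite -leqn0 -d0.
  by move/(dist0 cu); rewrite -v0 => E; rewrite E eqxx in nuv.
split=> //; apply/eqP/negP => npu.
apply: (negP (bridge_walk b)).
have key w : connect (bridge_rel e) r w -> 0 < dist (bridge_rel e) r w ->
    dist (bridge_rel e) r w <= dist (bridge_rel e) r v ->
    rem_edge e u v w (par (bridge_rel e) r w).
  move=> cw dw dwv; have [bw dpw _] := parP cw dw.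
  have pwv : par (bridge_rel e) r w != v.
    by apply/eqP => E; move: dpw; rewrite E; lia.
  rewrite /rem_edge /= esym (bridge_e bw) /= (negbTE pwv) andbF /=.
  apply/negP => /andP[/eqP wv /eqP pw]; subst w.
  by rewrite pw eqxx in npu.
have h1 := descend key cu duv.
have h2 := descend key cv (leqnn _).
apply: connect_trans h1 _.
by rewrite (sym_connect_sym (@rem_edge_sym u v)).
Qed.

Definition tedges (A : {set T}) : {set {set T}} :=
  [set b : {set T} | [exists x, exists y, [&& b == [set x; y], x \in A, y \in A & is_bridge e x y]]].

Lemma tedges_card A : is_tree_of e A -> #|tedges A| + 1 <= #|A|.
Proof.
move=> tA; case/tree_root: (tA) => r defA.
have rA : r \in A by rewrite defA inE connect0.
rewrite (cardsD1 r A) rA addnC leq_add2l.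
pose g v := [set v; par (bridge_rel e) r v].
have sub : tedges A \subset g @: (A :\ r).
  apply/subsetP => b; rewrite inE => /existsP[x /existsP[y /and4P[/eqP -> xA yA bxy]]].
  have cx : connect (bridge_rel e) r x by move: xA; rewrite defA inE.
  have cy : connect (bridge_rel e) r y by move: yA; rewrite defA inE.
  case: (leqP (dist (bridge_rel e) r x) (dist (bridge_rel e) r y)) => hd.
    have [dy py] := bfs_bridge cx cy bxy hd.
    apply/imsetP; exists y; last by rewrite /g py setUC.
    rewrite !inE yA andbT; apply/negP => /eqP E; move: dy; rewrite E dist_r.
    done.
  have byx : is_bridge e y x by rewrite is_bridge_sym.
  have [dx px] := bfs_bridge cy cx byx (ltnW hd).
  apply/imsetP; exists x; last by rewrite /g px.
  rewrite !inE xA andbT; apply/negP => /eqP E; move: dx; rewrite E dist_r.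
  done.
apply: leq_trans (subset_leq_card sub) _; exact: leq_imset_card.
Qed.

Lemma tree_link_eq A B u1 u2 v1 v2 : is_tree_of e A -> is_tree_of e B -> A != B ->
  u1 \in A -> u2 \in A -> v1 \in B -> v2 \in B -> e u1 v1 -> e u2 v2 -> u1 = u2.
Proof.
move=> tA tB nAB u1A u2A v1B v2B e1 e2.
apply/eqP/negP => /negP nu.
have c2 := tree_conn tA u1A u2A.
have d2 : 0 < dist (bridge_rel e) u1 u2.
  by rewrite lt0n; apply/negP => /eqP /(dist0 c2) E; rewrite E eqxx in nu.
have [bw dw cw] := parP c2 d2.
set w := par (bridge_rel e) u1 u2 in bw dw cw.
have wA : w \in A by apply: tree_closed' u2A bw.
have notB a : a \in B -> (a \in A) = false.
  by move=> aB; apply/negP => aA; apply: tree_disj tA tB nAB aA aB.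
apply: (negP (bridge_walk bw)).
rewrite (sym_connect_sym (@rem_edge_sym w u2)).
have s1 : rem_edge e w u2 u2 v2.
  rewrite /rem_edge /= e2 /=; apply/negP => /orP[] /andP[/eqP a /eqP b].
    by move: (bridge_e bw); rewrite -a eirr.
  by move: v2B; rewrite b => /notB; rewrite wA.
apply: connect_trans (connect1 s1) _.
have s2 : connect (rem_edge e w u2) v2 v1.
  apply: (@connect_closed_sub _ (bridge_rel e) _ (mem B)) (tree_conn tB v2B v1B).
  - by move=> a b aB bab; apply: tree_closed tB aB bab.
  - move=> a b aB bab; rewrite /rem_edge /= (bridge_e bab) /=.
    have aA := notB a aB.
    by apply/negP => /orP[] /andP[/eqP ha _]; move: aA; rewrite ha ?wA ?u2A.
  - exact: v2B.
apply: connect_trans s2 _.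
have s3 : rem_edge e w u2 v1 u1.
  rewrite /rem_edge /= esym e1 /=.
  by apply/negP => /orP[] /andP[/eqP ha _]; move: (notB v1 v1B); rewrite ha ?wA ?u2A.
apply: connect_trans (connect1 s3) _.
rewrite (sym_connect_sym (@rem_edge_sym w u2)).
apply: (@descend T (bridge_rel e) u1 (rem_edge e w u2) (dist (bridge_rel e) u1 w)) => //.
move=> a ca da dam; have [ba dpa _] := parP ca da.
rewrite /rem_edge /= esym (bridge_e ba) /=.
apply/negP => /orP[] /andP[/eqP ha /eqP hb].
  rewrite hb ha dw in dpa.
  exact: arith1 d2 dpa.
rewrite ha dw in dam.
exact: arith2 d2 dam.
Qed.


Lemma add_edges_sym (E : {set {set T}}) : symmetric (add_edges e E).
Proof. by move=> x y; rewrite /add_edges /= esym eq_sym setUC. Qed.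

Lemma add_edges_sub (E1 E2 : {set {set T}}) (x y : T) : E1 \subset E2 -> add_edges e E1 x y -> add_edges e E2 x y.
Proof.
move=> s; rewrite /add_edges /= => /orP[-> //| /andP[-> h]].
by rewrite (subsetP s _ h) orbT.
Qed.

Lemma tri_pair (h : rel T) a c b x y : symmetric h -> h a b -> h c b ->
  [set x; y] = [set a; c] -> exists z, h x z && h y z.
Proof.
move=> hs hab hcb E; exists b.
by case: (set2_eq E) => [[-> ->]|[-> ->]]; rewrite ?hab ?hcb.
Qed.

Definition Nedge x y := e x y && ~~ [exists z, e x z && e y z].

Lemma Nedge_sym x y : Nedge x y = Nedge y x.
Proof.
rewrite /Nedge esym; congr (_ && ~~ _); apply: eq_existsb => z; exact: andbC.
Qed.

Definition useful E f := [exists x, exists y, exists z,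
  [&& Nedge x y, add_edges e E x z, add_edges e E y z &
      (f == [set x; z]) || (f == [set y; z])]].

Lemma all_useful E : min_completion_set e E -> forall f, f \in E -> useful E f.
Proof.
case=> [[ne cov] mn].
pose E1 := [set f in E | useful E f].
have lift a z : add_edges e E a z -> useful E [set a; z] -> add_edges e E1 a z.
  rewrite /add_edges /= => /orP[-> //| /andP[-> h]] u.
  by rewrite inE h u orbT.
have c1 : completion_set e E1.
  split.
    by move=> f; rewrite inE => /andP[fE _]; exact: ne.
  move=> x y; rewrite {1}/add_edges /= => /orP[exy | /andP[nxy]].
    case: (boolP [exists z, e x z && e y z]) => [/existsP[z /andP[a b]] | ntri].
      by exists z; rewrite /add_edges /= a b.
    have hE : add_edges e E x y by rewrite /add_edges /= exy.
    case: (cov x y hE) => z /andP[hx hy].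
    have Nxy : Nedge x y by rewrite /Nedge exy ntri.
    exists z; apply/andP; split; apply: lift => //;
      apply/existsP; exists x; apply/existsP; exists y;
      apply/existsP; exists z; by rewrite Nxy hx hy !eqxx ?orbT.
  rewrite inE => /andP[fE /existsP[a /existsP[b /existsP[c /and4P[Nab hac hbc hf]]]]].
  have eab : e a b by case/andP: Nab.
  have ua : useful E [set a; c].
    apply/existsP; exists a; apply/existsP; exists b; apply/existsP; exists c.
    by rewrite Nab hac hbc eqxx.
  have ub : useful E [set b; c].
    apply/existsP; exists a; apply/existsP; exists b; apply/existsP; exists c.
    by rewrite Nab hac hbc eqxx orbT.
  case/orP: hf => /eqP hf.
    apply: (tri_pair (add_edges_sym E1) (b := b) _ _ hf).
      by rewrite /add_edges /= eab.
    by rewrite add_edges_sym; apply: lift.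
  apply: (tri_pair (add_edges_sym E1) (b := a) _ _ hf).
    by rewrite /add_edges /= esym eab.
  by rewrite add_edges_sym; apply: lift.
have := mn E1 c1.
have sub : E1 \subset E by apply/subsetP => f; rewrite inE => /andP[].
rewrite (geq_leqif (subset_leqif_cards sub)) => /eqP E1E f fE.
have : f \in E1 by rewrite E1E.
by rewrite inE => /andP[].
Qed.

Lemma path_exit (P : pred T) (R : rel T) x0 p : P x0 -> path R x0 p -> ~~ P (last x0 p) ->
  exists u w, [/\ P u, ~~ P w & R u w].
Proof.
elim: p x0 => [|y p IH] x0 Px0 /=; first by rewrite Px0.
case/andP=> Rxy pth hl.
case: (boolP (P y)) => Py; first exact: IH Py pth hl.
by exists x0, y.
Qed.

Lemma third_nbr A x y : is_tree_of e A -> 3 <= #|A| -> x \in A -> is_bridge e x y ->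
  exists w, (is_bridge e x w && (w != y)) || (is_bridge e y w && (w != x)).
Proof.
move=> tA sA xA bxy.
have : 0 < #|A :\: [set x; y]|.
  rewrite cardsD; have := subset_leq_card (subsetIr A [set x; y]).
  rewrite cards2; move: sA; case: (x != y) => /=; lia.
case/card_gt0P => t; rewrite !inE => /andP[ntxy tAm].
have ct := tree_conn tA xA tAm.
case/connectP: ct => p pth lt.
have lt' : ~~ (mem [set x; y]) (last x p) by rewrite -lt !inE.
have [u [w [Pu Pw Ruw]]] := @path_exit (mem [set x; y]) _ x p (set21 _ _) pth lt'.
exists w; move: Pu Pw; rewrite !inE negb_or => /orP[]/eqP Eu /andP[nwx nwy]; subst u.
  by move: Ruw; rewrite /bridge_rel /= => ->; rewrite nwy.
by move: Ruw; rewrite /bridge_rel /= => ->; rewrite nwx orbT.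
Qed.


Section Main.
Variables (E : {set {set T}}) (Ti Tj : {set T}).
Hypotheses (ch : chordal e) (mE : min_completion_set e E)
  (tI : is_tree_of e Ti) (tJ : is_tree_of e Tj) (nIJ : Ti != Tj)
  (sI : 3 <= #|Ti|) (sJ : 3 <= #|Tj|).

Let C := cross_edges E Ti Tj.
Let D := E :\: C.
Let HD := add_edges e D.
Let H := add_edges e E.

Lemma notIJ x : x \in Ti -> x \in Tj -> False.
Proof. by move=> a b; apply: tree_disj tI tJ nIJ a b. Qed.

Lemma C_mem f : f \in C -> f \in E /\ exists u v, [/\ u \in Ti, v \in Tj & f = [set u; v]].
Proof.
rewrite inE => /andP[fE /existsP[u /andP[uI /existsP[v /andP[vJ /eqP Ef]]]]].
by split => //; exists u, v.
Qed.

Lemma C_intro u v : [set u; v] \in E -> ((u \in Ti) && (v \in Tj)) || ((u \in Tj) && (v \in Ti)) ->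
  [set u; v] \in C.
Proof.
move=> h /orP[] /andP[a b]; rewrite inE h /=; apply/existsP.
  by exists u; rewrite a; apply/existsP; exists v; rewrite b eqxx.
by exists v; rewrite b; apply/existsP; exists u; rewrite a setUC eqxx.
Qed.

Lemma C_pair a z : [set a; z] \in C ->
  ((a \in Ti) && (z \in Tj)) || ((a \in Tj) && (z \in Ti)).
Proof.
case/C_mem => _ [u [v [uI vJ /set2_eq [[-> ->]|[-> ->]]]]].
  by rewrite uI vJ.
by rewrite uI vJ orbT.
Qed.

Lemma H_HD a z : H a z -> ~~ HD a z -> [set a; z] \in C.
Proof.
rewrite /H /HD /add_edges /= => /orP[-> //| /andP[-> h]] /norP[_].
by rewrite /D inE h andbT negbK.
Qed.

Definition Kg := [set g : {set T} | [exists u, exists v,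
  [&& g == [set u; v], u \in Ti, v \in Tj & e u v]]].
Definition K := C :|: Kg.

Lemma cross_K y z : ((y \in Ti) && (z \in Tj)) || ((y \in Tj) && (z \in Ti)) ->
  H y z -> [set y; z] \in K.
Proof.
move=> yz; rewrite /H /add_edges /= => /orP[eyz | /andP[_ h]].
  apply/setUP; right; rewrite inE; case/orP: yz => /andP[a b].
    by apply/existsP; exists y; apply/existsP; exists z; rewrite eqxx a b eyz.
  by apply/existsP; exists z; apply/existsP; exists y; rewrite setUC eqxx a b esym eyz.
by apply/setUP; left; apply: C_intro.
Qed.

Lemma apex x y : is_bridge e x y -> ~~ [exists z, HD x z && HD y z] ->
  exists z, [/\ [set x; z] \in K, [set y; z] \in K &
    ((x \in Ti) && (y \in Ti) && (z \in Tj)) || ((x \in Tj) && (y \in Tj) && (z \in Ti))].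
Proof.
move=> bxy nc.
case: mE => [[_ cov] _].
have hE : add_edges e E x y by rewrite /add_edges /= (bridge_e bxy).
case: (cov x y hE) => z /andP[hx hy].
have byx : is_bridge e y x by rewrite is_bridge_sym.
have key : ((x \in Ti) && (y \in Ti) && (z \in Tj)) || ((x \in Tj) && (y \in Tj) && (z \in Ti)).
  case: (boolP (HD x z)) => hdx.
    case: (boolP (HD y z)) => hdy.
      by move: nc; rewrite negb_exists => /forallP/(_ z); rewrite hdx hdy.
    case/orP: (C_pair (H_HD hy hdy)) => /andP[a b].
      by rewrite a b (tree_closed' tI a bxy).
    by rewrite a b (tree_closed' tJ a bxy) orbT.
  case/orP: (C_pair (H_HD hx hdx)) => /andP[a b].
    by rewrite a b (tree_closed tI a bxy).
  by rewrite a b (tree_closed tJ a bxy) orbT.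
exists z; split => //; apply: cross_K => //; case/orP: key => /andP[/andP[a b] c];
  by rewrite ?a ?b ?c ?orbT.
Qed.

Definition ubr x y := [&& is_bridge e x y, (x \in Ti) || (x \in Tj) &
  ~~ [exists z, HD x z && HD y z]].
Definition U := [set b : {set T} | [exists x, exists y, (b == [set x; y]) && ubr x y]].

Definition fixc (b : {set T}) (q : T * T * T) :=
  [&& b == [set q.1.1; q.1.2], is_bridge e q.1.1 q.1.2, is_bridge e q.1.1 q.2 & q.2 != q.1.2].
Definition fixf b := if [pick q | fixc b q] is Some q then [set q.2; q.1.2] else set0.
Definition F := fixf @: U.
Definition E2 := D :|: F.

Lemma U_tree b : b \in U -> exists x y, [/\ b = [set x; y], is_bridge e x y &
  ((x \in Ti) && (y \in Ti)) || ((x \in Tj) && (y \in Tj))].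
Proof.
rewrite inE => /existsP[x /existsP[y /andP[/eqP -> /and3P[bxy xT _]]]].
exists x, y; split => //; case/orP: xT => h.
  by rewrite h (tree_closed tI h bxy).
by rewrite h (tree_closed tJ h bxy) orbT.
Qed.

Lemma fix_spec b : b \in U -> exists a bb w, [/\ b = [set a; bb], is_bridge e a bb,
  is_bridge e a w && (w != bb), fixf b = [set w; bb] &
  ((a \in Ti) && (bb \in Ti) && (w \in Ti)) || ((a \in Tj) && (bb \in Tj) && (w \in Tj))].
Proof.
move=> bU; have [x [y [bE bxy xyT]]] := U_tree bU.
have ex : exists q, fixc b q.
  have [A0 [tA sA xA]] : exists A0, [/\ is_tree_of e A0, 3 <= #|A0| & x \in A0].
    by case/orP: xyT => /andP[h _]; [exists Ti; split | exists Tj; split].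
  have [w /orP[] /andP[b1 b2]] := third_nbr tA sA xA bxy.
    by exists (x, y, w); rewrite /fixc /= bE eqxx bxy b1 b2.
  exists (y, x, w); rewrite /fixc /= bE setUC eqxx b1 b2 andbT.
  by rewrite is_bridge_sym bxy.
rewrite /fixf; case: pickP => [q' fq'|none]; last by case: ex => q; rewrite none.
case/and4P: fq' => /eqP b0 b1 b2 b3.
exists q'.1.1, q'.1.2, q'.2; split => //; first by rewrite b2 b3.
have aT : ((q'.1.1 \in Ti) && (q'.1.2 \in Ti)) || ((q'.1.1 \in Tj) && (q'.1.2 \in Tj)).
  move: xyT; rewrite bE in b0; case: (set2_eq b0) => [[<- <-]|[<- <-]] //.
  by rewrite andbC [(y \in Tj) && _]andbC.
case/orP: aT => /andP[h1 h2].
  by rewrite h1 h2 (tree_closed tI h1 b2).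
by rewrite h1 h2 (tree_closed tJ h1 b2) orbT.
Qed.

Lemma F_spec f : f \in F -> exists u v, [/\ u != v, ~~ e u v, f = [set u; v] &
  ((u \in Ti) && (v \in Ti)) || ((u \in Tj) && (v \in Tj))].
Proof.
case/imsetP => b bU ->; have [a [bb [w [_ b1 /andP[b2 nwb] -> T3]]]] := fix_spec bU.
exists w, bb; split => //.
  by apply/negP => ewb; apply: (bridge_tri b2 (bridge_e b1) ewb).
by case/orP: T3 => /andP[/andP[_ h1] h2]; rewrite h1 h2 ?orbT.
Qed.


Lemma U_sub : U \subset tedges Ti :|: tedges Tj.
Proof.
apply/subsetP => b /U_tree [x [y [-> bxy /orP[] /andP[hx hy]]]]; apply/setUP;
  [left | right]; rewrite inE; apply/existsP; exists x; apply/existsP; exists y;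
  by rewrite eqxx hx hy bxy.
Qed.

Lemma Kg_card : #|Kg| <= 1.
Proof.
apply/card_le1_eqP => g1 g2; rewrite !inE.
move=> /existsP[u1 /existsP[v1 /and4P[/eqP -> u1I v1J e1]]].
move=> /existsP[u2 /existsP[v2 /and4P[/eqP -> u2I v2J e2]]].
have eu := tree_link_eq tI tJ nIJ u1I u2I v1J v2J e1 e2.
have nJI : Tj != Ti by rewrite eq_sym.
have ev := tree_link_eq tJ tI nJI v1J v2J u1I u2I (etrans (esym _ _) e1) (etrans (esym _ _) e2).
by rewrite eu ev.
Qed.

Definition Wr := [rel u v | (is_bridge e u v && ([set u; v] \notin U)) || ([set u; v] \in K)].

Lemma Wr_sym : symmetric Wr.
Proof. by move=> u v; rewrite /Wr /= is_bridge_sym setUC. Qed.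

Lemma bridge_Wr a b : is_bridge e a b -> connect Wr a b.
Proof.
move=> bab; case: (boolP ([set a; b] \in U)) => hU; last first.
  by apply: connect1; rewrite /Wr /= bab hU.
move: hU; rewrite inE => /existsP[x /existsP[y /andP[/eqP Eb /and3P[bxy _ nc]]]].
have [z [kx ky _]] := apex bxy nc.
have cxy : connect Wr x y.
  apply: (@connect_trans _ _ z); apply: connect1; rewrite /Wr /=.
    by rewrite kx orbT.
  by rewrite setUC ky orbT.
case: (set2_eq Eb) => [[-> ->] //|[-> ->]].
by rewrite (sym_connect_sym Wr_sym).
Qed.

Lemma U_card : 0 < #|C| -> #|U| <= #|C|.
Proof.
case/card_gt0P => c0 /C_mem [c0E [p [q [pI qJ Ec0]]]].
pose V := Ti :|: Tj.
pose S := ((tedges Ti :|: tedges Tj) :\: U) :|: K.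
have pV : p \in V by rewrite inE pI.
have conV : forall v, v \in V -> connect Wr p v.
  have sub : subrel (connect (bridge_rel e)) (connect Wr).
    by apply: connect_sub => a b; apply: bridge_Wr.
  move=> v; rewrite inE => /orP[vI | vJ].
    exact: sub (tree_conn tI pI vI).
  have pqC : [set p; q] \in C by apply: C_intro; [rewrite -Ec0 | rewrite pI qJ].
  have pq : Wr p q by rewrite /Wr /= /K in_setU pqC orbT.
  apply: (@connect_trans _ _ q); first exact: connect1.
  exact: sub (tree_conn tJ qJ vJ).
have inS : forall u v, v \in V -> Wr u v -> [set u; v] \in S.
  move=> u v vV; rewrite /Wr /= => /orP[/andP[buv nU] | hK]; last first.
    by rewrite /S in_setU hK orbT.
  rewrite /S in_setU in_setD nU /=; apply/orP; left.
  move: vV; rewrite in_setU => /orP[vI | vJ]; apply/setUP; [left | right];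
    rewrite inE; apply/existsP; exists u; apply/existsP; exists v.
    by rewrite eqxx vI (tree_closed' tI vI buv) buv.
  by rewrite eqxx vJ (tree_closed' tJ vJ buv) buv.
have hc := conn_card pV conV inS.
have cV : #|V| = #|Ti| + #|Tj|.
  rewrite /V cardsU; have -> : Ti :&: Tj = set0.
    by apply/setP => x; rewrite !inE; apply/negP => /andP[a b]; apply: notIJ a b.
  by rewrite cards0 subn0.
have cS : #|S| <= #|(tedges Ti :|: tedges Tj) :\: U| + #|K| by rewrite /S cardsU leq_subr.
have cD := cardsID U (tedges Ti :|: tedges Tj).
rewrite (setIidPr U_sub) in cD.
have cA : #|tedges Ti :|: tedges Tj| <= #|tedges Ti| + #|tedges Tj| by rewrite cardsU leq_subr.
have cK : #|K| <= #|C| + #|Kg| by rewrite /K cardsU leq_subr.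
exact: (arith_U hc cV cS cD cA cK Kg_card (tedges_card tI) (tedges_card tJ)).
Qed.


Lemma E2_card : 0 < #|C| -> #|E2| <= #|E|.
Proof.
move=> Cpos.
have CE : C \subset E by apply/subsetP => f /C_mem[].
have cE := cardsID C E; rewrite (setIidPr CE) in cE.
have cF : #|F| <= #|U| by apply: leq_imset_card.
have cU := U_card Cpos.
rewrite /E2 cardsU -cE; apply: leq_trans (leq_subr _ _) _.
rewrite addnC leq_add2r; exact: leq_trans cF cU.
Qed.

Lemma D_tri a b c : Nedge a b -> H b c -> [set a; c] \in D -> add_edges e E2 c b.
Proof.
move=> Nab hbc acD.
have bab : is_bridge e a b by case/andP: Nab => eab ntri; apply: notri_bridge.
move: hbc; rewrite /H /add_edges /= => /orP[ebc | /andP[nbc bcE]].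
  by rewrite esym ebc.
apply/orP; right; rewrite eq_sym nbc /= /E2 in_setU; apply/orP; left.
rewrite setUC; case: (boolP ([set b; c] \in C)) => bcC; last by rewrite /D in_setD bcC bcE.
exfalso; move: acD; rewrite /D in_setD => /andP[/negP acC acE]; apply: acC.
apply: C_intro => //; case/orP: (C_pair bcC) => /andP[bI cJ].
  by rewrite (tree_closed' tI bI bab) cJ.
by rewrite (tree_closed' tJ bI bab) cJ orbT.
Qed.

Lemma E2_completion : completion_set e E2.
Proof.
case: mE => [[ne cov] _].
have lift x z : HD x z -> add_edges e E2 x z.
  by apply: add_edges_sub; apply: subsetUl.
split.
  move=> f; rewrite /E2 in_setU => /orP[fD | fF].
    by apply: ne; move: fD; rewrite /D in_setD => /andP[].
  by have [u [v [nuv neuv -> _]]] := F_spec fF; exists u, v.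
move=> x y; rewrite {1}/add_edges /= => /orP[exy | /andP[nxy fE2]].
  case: (boolP [exists z, e x z && e y z]) => [/existsP[z /andP[a b]] | ntri].
    by exists z; rewrite /add_edges /= a b.
  have bxy := notri_bridge ch exy ntri.
  case: (boolP [exists z, HD x z && HD y z]) => [/existsP[z /andP[a b]] | nc].
    by exists z; rewrite !lift.
  have [z [_ _ T3]] := apex bxy nc.
  have xU : [set x; y] \in U.
    rewrite inE; apply/existsP; exists x; apply/existsP; exists y.
    rewrite eqxx /ubr bxy nc andbT /=.
    by case/orP: T3 => /andP[/andP[-> _] _] //; rewrite orbT.
  have [a [bb [w [Eb bab /andP[baw nwb] fx _]]]] := fix_spec xU.
  have wbF : [set bb; w] \in E2.
    by rewrite /E2 in_setU; apply/orP; right; rewrite setUC -fx; apply: imset_f xU.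
  apply: (tri_pair (add_edges_sym E2) (b := w) _ _ Eb).
    by rewrite /add_edges /= (bridge_e baw).
  by apply/orP; right; rewrite eq_sym nwb wbF.
move: fE2; rewrite /E2 in_setU => /orP[fD | fF].
  have fE : [set x; y] \in E by move: fD; rewrite /D in_setD => /andP[].
  have := all_useful mE fE.
  move=> /existsP[a /existsP[b /existsP[c /and4P[Nab hac hbc /orP[] /eqP hf]]]].
    apply: (tri_pair (add_edges_sym E2) (b := b) _ _ hf).
      by rewrite /add_edges /=; case/andP: Nab => ->.
    by apply: (D_tri Nab hbc); rewrite -hf.
  apply: (tri_pair (add_edges_sym E2) (b := a) _ _ hf).
    by rewrite /add_edges /=; case/andP: Nab => eab _; rewrite esym eab.
  have Nba : Nedge b a by rewrite Nedge_sym.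
  by apply: (D_tri Nba hac); rewrite -hf.
case/imsetP: fF => b0 b0U fx.
have [a [bb [w [_ bab /andP[baw nwb] fx' _]]]] := fix_spec b0U.
rewrite fx' in fx.
apply: (tri_pair (add_edges_sym E2) (b := a) _ _ fx).
  by rewrite /add_edges /= esym (bridge_e baw).
by rewrite /add_edges /= esym (bridge_e bab).
Qed.

Lemma E2_nocross : cross_edges E2 Ti Tj = set0.
Proof.
apply/setP => f; rewrite [in RHS]inE; apply/negP.
rewrite inE => /andP[fE2 /existsP[u /andP[uI /existsP[v /andP[vJ /eqP Ef]]]]].
move: fE2; rewrite /E2 in_setU => /orP[fD | fF].
  move: fD; rewrite /D in_setD => /andP[/negP fC fE]; apply: fC.
  by rewrite Ef; apply: C_intro; rewrite -?Ef // uI vJ.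
have [u' [v' [_ _ Ef' T3]]] := F_spec fF.
rewrite Ef' in Ef; case: (set2_eq Ef) => [[a b]|[a b]]; subst;
  case/orP: T3 => /andP[h1 h2]; by [apply: (notIJ h1) | apply: (notIJ h2) | apply: (notIJ uI) | apply: (notIJ vJ) ].
Qed.

End Main.
End Graph.


Unset Implicit Arguments.

Theorem lemma12 (T : finType) (e : rel T) (E' : {set {set T}}) (Ti Tj : {set T}) :
  simple_graph e -> connected_graph e -> chordal e -> 3 <= #|T| ->
  min_completion_set e E' ->
  is_tree_of e Ti -> is_tree_of e Tj -> Ti != Tj ->
  3 <= #|Ti| -> 3 <= #|Tj| ->
  0 < #|cross_edges E' Ti Tj| ->
  exists (E'' F : {set {set T}}),
    [/\ min_completion_set e E'',
        #|cross_edges E'' Ti Tj| = 0,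
        E'' = (E' :\: cross_edges E' Ti Tj) :|: F &
        forall f, f \in F -> exists u v : T,
          [/\ u != v, ~~ e u v, f = [set u; v] &
              ((u \in Ti) && (v \in Ti)) || ((u \in Tj) && (v \in Tj))]].
Proof.
move=> [esym eirr] econn ch _ mE tI tJ nIJ sI sJ Cpos.
exists (E2 e E' Ti Tj), (F e E' Ti Tj); split.
- split; first exact: (E2_completion esym eirr econn ch mE tI tJ sI sJ).
  move=> F2 cF2; apply: leq_trans (E2_card esym eirr econn mE tI tJ nIJ Cpos) _.
  by case: mE => _ /(_ F2 cF2).
- by rewrite (E2_nocross esym eirr econn E' tI tJ nIJ sI sJ) cards0.
- by [].
- by move=> f fF; apply: (F_spec esym eirr econn tI tJ sI sJ fF).
Qed.
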